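(* Let $\mathbf s^1:\mathcal X\to\{0,1\}^m$ be a first selection rule and, for $c\in[k]$, let $\tilde{\mathbf d}_c:\{0,1\}^m\times\mathcal X\to\mathcal D_c$ be decision strategies and $\tilde{\mathbf s}_c:\mathcal D_c\times\mathcal X\to\{0,1\}^m$ selection strategies. Suppose that for every $c\in[k]$ the extended selection rule $\mathbf g_c(\mathbf S,\mathbf X)=\tilde{\mathbf s}_c(\tilde{\mathbf d}_c(\mathbf S,\mathbf X),\mathbf X)$ is contracting ($\mathbf g_c(\mathbf S,\mathbf X)\preceq\mathbf S$ with probability 1 for all $\mathbf S$) and increasing ($\mathbf g_c(\mathbf S,\mathbf X)\preceq\mathbf g_c(\mathbf S',\mathbf X)$ with probability 1 for all $\mathbf S\preceq\mathbf S'$). Then the parallel intersection procedure and the sequential composition procedure (defined in the context) converge to the same selected set and the same decisions.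
   Context: $\preceq$ is the componentwise order on $\{0,1\}^m$; $\bigcap$ of vectors in $\{0,1\}^m$ is the componentwise product. Parallel intersection: $\mathbf S^1=\mathbf s^1(\mathbf X)$; for $t\ge1$, $\mathbf D_c^t=\tilde{\mathbf d}_c(\mathbf S^t,\mathbf X)$ and $\mathbf S_c^{t+1}=\tilde{\mathbf s}_c(\mathbf D_c^t,\mathbf X)$ for all $c$, $\mathbf S^{t+1}=\bigcap_{c\in[k]}\mathbf S_c^{t+1}$; stop at the first $T$ with $\mathbf S^{T+1}=\mathbf S^T$. Sequential composition: $\mathbf S^1=\mathbf s^1(\mathbf X)$; for $t\ge1$, set $\mathbf S'^{t+1}_0=\mathbf S^t$ and for $c=1,\dots,k$, $\mathbf D_c^t=\tilde{\mathbf d}_c(\mathbf S'^{t+1}_{c-1},\mathbf X)$, $\mathbf S'^{t+1}_c=\tilde{\mathbf s}_c(\mathbf D_c^t,\mathbf X)$; then $\mathbf S^{t+1}=\mathbf S'^{t+1}_k$; stop at the first $T$ with $\mathbf S^{T+1}=\mathbf S^T$. Each procedure outputs its final selected set and decisions $(\mathbf D_c^T)_{c\in[k]}$. *)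

(* Defs.v *)
From mathcomp Require Import all_boot.
Set Implicit Arguments. Unset Strict Implicit. Unset Printing Implicit Defensive.

Definition selvec (m : nat) := {ffun 'I_m -> bool}.

Definition vle (m : nat) (S S' : selvec m) : Prop := forall i, S i ==> S' i.

Definition vcap (m k : nat) (F : 'I_k -> selvec m) : selvec m :=
  [ffun i => [forall c, F c i]].

Section Procedures.
Variables (Xt : Type) (m k : nat) (D : 'I_k -> Type).
Variables (s1 : Xt -> selvec m)
          (d : forall c : 'I_k, selvec m -> Xt -> D c)
          (s : forall c : 'I_k, D c -> Xt -> selvec m).
Variable X : Xt.

Definition gsel (c : 'I_k) (S : selvec m) (X0 : Xt) : selvec m := @s c (@d c S X0) X0.

Definition par_step (S : selvec m) : selvec m := vcap (fun c => gsel c S X).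
(* parS t = S^t for t >= 1 (paper indexing); parS 1 = s1 X *)
Definition parS (t : nat) : selvec m := iter t.-1 par_step (s1 X).
Definition parD (t : nat) (c : 'I_k) : D c := @d c (parS t) X.
Definition par_first_stop (T : nat) : Prop :=
  1 <= T /\ parS T.+1 = parS T /\ (forall t, 1 <= t -> t < T -> parS t.+1 <> parS t).

(* seq_part S j = S'_j (j = 0..k), with S'_0 = S and
   S'_{j+1} = s_{c}(d_c(S'_j, X), X) for the (j+1)-th component c (0-indexed j) *)
Fixpoint seq_part (S : selvec m) (j : nat) : selvec m :=
  match j with
  | 0 => S
  | j'.+1 => match @insub nat (fun n => n < k) 'I_k j' with
             | Some c => gsel c (seq_part S j') X
             | None => seq_part S j'
             end
  end.
Definition seq_step (S : selvec m) : selvec m := seq_part S k.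
Definition seqS (t : nat) : selvec m := iter t.-1 seq_step (s1 X).
(* decision of the (paper) component c+1 at round t: d_c(S'^{t+1}_{c}, X)
   where the 0-indexed c : 'I_k uses S'_{val c} (paper S'_{(c+1)-1}) *)
Definition seqD (t : nat) (c : 'I_k) : D c := @d c (seq_part (seqS t) c) X.
Definition seq_first_stop (T : nat) : Prop :=
  1 <= T /\ seqS T.+1 = seqS T /\ (forall t, 1 <= t -> t < T -> seqS t.+1 <> seqS t).

End Procedures.

(* Main.v *)
Require Import Defs.
From mathcomp Require Import all_boot.

Section Gen.
Variable m : nat.
Implicit Types A B S : selvec m.

Lemma vle_refl S : vle S S.
Proof. by move=> i; apply/implyP. Qed.

Lemma vle_trans A B C : vle A B -> vle B C -> vle A C.
Proof. move=> h1 h2 i; apply/implyP=> a; exact: (implyP (h2 i) (implyP (h1 i) a)). Qed.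

Lemma vle_anti A B : vle A B -> vle B A -> A = B.
Proof.
move=> h1 h2; apply/ffunP=> i; have := h1 i; have := h2 i.
by case: (A i); case: (B i).
Qed.

Definition cnt S := #|[pred i | S i]|.

Lemma cnt_lt A B : vle A B -> A <> B -> cnt A < cnt B.
Proof.
move=> h ne; apply: proper_card; rewrite properE; apply/andP; split.
  by apply/subsetP=> i; rewrite !inE; exact/implyP.
apply/negP=> /subsetP sub; apply: ne; apply: vle_anti => // i.
by apply/implyP=> Bi; have := sub i; rewrite !inE; apply.
Qed.

Lemma cnt_le S : cnt S <= m.
Proof. by apply: leq_trans (max_card _) _; rewrite card_ord. Qed.

Variable f : selvec m -> selvec m.
Hypothesis hc : forall S, vle (f S) S.

Lemma iter_le x0 n : vle (iter n f x0) x0.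
Proof.
elim: n => [|n IH] /=; first exact: vle_refl.
exact: vle_trans (hc _) IH.
Qed.

Lemma stab x0 : exists n, iter n.+1 f x0 = iter n f x0.
Proof.
case: (boolP [exists j : 'I_m.+1, iter j.+1 f x0 == iter j f x0]).
  by case/existsP=> j /eqP; exists j.
move/existsPn=> H.
have key : forall n, n <= m.+1 -> cnt (iter n f x0) + n <= cnt x0.
  elim=> [|n IH] Hn; first by rewrite addn0.
  have Hn' : n < m.+1 by [].
  have ne := H (Ordinal Hn').
  have lt := cnt_lt _ _ (hc (iter n f x0)) (elimN eqP ne).
  rewrite addnS /=; apply: leq_trans (IH (ltnW Hn)); by rewrite ltn_add2r.
have := key m.+1 (leqnn _); have := cnt_le x0.
move=> a b; have := leq_trans (leq_addl _ _) b; by rewrite ltnNge a.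
Qed.

Lemma first_stop x0 : exists T, 1 <= T /\ iter T f x0 = iter T.-1 f x0 /\
  (forall t, 1 <= t -> t < T -> iter t f x0 <> iter t.-1 f x0).
Proof.
have ex : exists n, iter n.+1 f x0 == iter n f x0.
  by case: (stab x0) => n h; exists n; apply/eqP.
case: (ex_minnP ex) => n /eqP hn hmin.
exists n.+1; split=> //; split=> // [[|t]] // _ lt /eqP e.
by have := hmin t e; rewrite leqNgt -ltnS lt.
Qed.

Lemma below_iter (F : selvec m) x0 :
  vle F x0 -> (forall S, vle F S -> vle F (f S)) -> forall n, vle F (iter n f x0).
Proof. by move=> h0 hs; elim=> //= n IH; apply: hs. Qed.

End Gen.

Set Implicit Arguments. Unset Strict Implicit.
Section Spec.
Variables (Xt : Type) (m k : nat) (D : 'I_k -> Type)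
  (s1 : Xt -> selvec m)
  (d : forall c : 'I_k, selvec m -> Xt -> D c)
  (s : forall c : 'I_k, D c -> Xt -> selvec m)
  (X : Xt).
Hypothesis hk : 0 < k.
Hypothesis hcontr : forall (c : 'I_k) (S : selvec m), vle (gsel d s c S X) S.
Hypothesis hincr : forall (c : 'I_k) (S S' : selvec m),
      vle S S' -> vle (gsel d s c S X) (gsel d s c S' X).

Let g c S := gsel d s c S X.

Lemma par_contr S : vle (par_step d s X S) S.
Proof.
move=> i; rewrite /par_step /vcap ffunE; apply/implyP=> /forallP H.
exact: (implyP (hcontr (Ordinal hk) S i) (H _)).
Qed.

Lemma par_fix S : par_step d s X S = S -> forall c, g c S = S.
Proof.
move=> H c; apply: vle_anti; first exact: hcontr.
move=> i; apply/implyP=> Si; move: H => /ffunP /(_ i).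
rewrite /par_step /vcap ffunE Si => /forallP; apply.
Qed.

Lemma seq_part_step S j : vle (seq_part d s X S j.+1) (seq_part d s X S j).
Proof.
rewrite /=; case: insubP => [c _ _|_]; [exact: hcontr | exact: vle_refl].
Qed.

Lemma seq_part_mono S i j : i <= j -> vle (seq_part d s X S j) (seq_part d s X S i).
Proof.
move=> /subnK <-; elim: (j - i) => [|n IH]; first exact: vle_refl.
rewrite addSn; exact: vle_trans (seq_part_step _ _) IH.
Qed.

Lemma seq_contr S : vle (seq_step d s X S) S.
Proof. exact: (@seq_part_mono S 0 k (leq0n k)). Qed.

Lemma seq_fix_part S : seq_step d s X S = S -> forall j, j <= k -> seq_part d s X S j = S.
Proof.
move=> H j hj; apply: vle_anti; first exact: (@seq_part_mono S 0 j (leq0n j)).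
by rewrite -{1}H; apply: seq_part_mono.
Qed.

Lemma seq_fix S : seq_step d s X S = S -> forall c, g c S = S.
Proof.
move=> H c; have h1 := seq_fix_part H (ltn_ord c).
have h0 := seq_fix_part H (ltnW (ltn_ord c)).
move: h1; rewrite /=; case: insubP => [c' _ e|]; last by rewrite ltn_ord.
have -> : c' = c by apply: val_inj.
by rewrite h0.
Qed.

Lemma par_below F S : (forall c, g c F = F) -> vle F S -> vle F (par_step d s X S).
Proof.
move=> hF h i; apply/implyP=> Fi; rewrite /par_step /vcap ffunE; apply/forallP=> c.
have := hincr c h i; have e := hF c; rewrite /g in e; rewrite e Fi; by apply.
Qed.

Lemma seq_below F S : (forall c, g c F = F) -> vle F S -> forall j, vle F (seq_part d s X S j).
Proof.
move=> hF h; elim=> //= j IH; case: insubP => // c _ _.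
rewrite -(hF c); exact: hincr.
Qed.

End Spec.
Unset Implicit Arguments.

Theorem proposition9 (Xt : Type) (m k : nat) (D : 'I_k -> Type)
  (s1 : Xt -> selvec m)
  (d : forall c : 'I_k, selvec m -> Xt -> D c)
  (s : forall c : 'I_k, D c -> Xt -> selvec m)
  (X : Xt)
  (hk : 0 < k)
  (hcontr : forall (c : 'I_k) (S : selvec m), vle (gsel d s c S X) S)
  (hincr : forall (c : 'I_k) (S S' : selvec m),
      vle S S' -> vle (gsel d s c S X) (gsel d s c S' X)) :
  (exists T, par_first_stop s1 d s X T) /\
  (exists T, seq_first_stop s1 d s X T) /\
  (forall T1 T2, par_first_stop s1 d s X T1 -> seq_first_stop s1 d s X T2 ->
     parS s1 d s X T1 = seqS s1 d s X T2 /\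
     forall c : 'I_k, parD s1 d s X T1 c = seqD s1 d s X T2 c).
Proof.
split.
  have [T [h1 [h2 h3]]] := first_stop _ _ (par_contr hk hcontr) (s1 X).
  exists T; split=> //; split=> //.
split.
  have [T [h1 [h2 h3]]] := first_stop _ _ (seq_contr hcontr) (s1 X).
  exists T; split=> //; split=> //.
move=> T1 T2 [h1 [h2 _]] [h1' [h2' _]].
rewrite /parS /seqS /= in h2 h2' *.
case: T1 h1 h2 => // T1 _ /= h2; case: T2 h1' h2' => // T2 _ /= h2'.
set A := iter T1 _ _ in h2 *; set B := iter T2 _ _ in h2' *.
have fA := par_fix hcontr h2. have fB := seq_fix hcontr h2'.
have eAB : A = B.
  apply: vle_anti.
    apply: below_iter; first exact: iter_le _ _ (par_contr hk hcontr) _ _.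
    move=> S hS; exact: (seq_below hincr fA hS k).
  apply: below_iter; first exact: iter_le _ _ (seq_contr hcontr) _ _.
  by move=> S hS; apply: (par_below hincr fB hS).
split=> // c; rewrite /parD /seqD /parS /seqS /= -/A -/B.
by rewrite (seq_fix_part hcontr h2' (ltnW (ltn_ord c))) eAB.
Qed.
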